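(* Let $A$ and $B$ be isoclinic finite groups. If $A$ is weakly-top, then $B$ is weakly-top. If $A$ is top, then $B$ is top.
   Context: For a group $H$, $H'$ denotes its commutator subgroup and $Z(H)$ its center. A finite group $G$ is weakly-top if $|H/H'| \leq |G/G'|$ for every proper subgroup $H<G$, and top if $|H/H'| < |G/G'|$ for every proper subgroup $H<G$. In every group $G$ the commutator map induces a well-defined surjective map $\theta_G : G/Z(G) \times G/Z(G) \to G'$, $(xZ(G),yZ(G)) \mapsto [x,y]=x^{-1}y^{-1}xy$. Two groups $A$ and $B$ are isoclinic (in the sense of P. Hall) if there exist isomorphisms $\phi : A' \to B'$ and $\psi : A/Z(A) \to B/Z(B)$ such that $\phi(\theta_A(u,v)) = \theta_B(\psi(u),\psi(v))$ for all $u,v \in A/Z(A)$. *)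

(* Defs.v *)
From mathcomp Require Import all_boot all_fingroup all_solvable.
Set Implicit Arguments. Unset Strict Implicit. Unset Printing Implicit Defensive.
Import GroupScope.
Local Open Scope group_scope.

Definition weakly_top (gT : finGroupType) (G : {group gT}) : Prop :=
  forall H : {group gT}, H \proper G -> #|H / H^`(1)| <= #|G / G^`(1)|.

Definition top (gT : finGroupType) (G : {group gT}) : Prop :=
  forall H : {group gT}, H \proper G -> #|H / H^`(1)| < #|G / G^`(1)|.

(* Isoclinism in the sense of P. Hall: isomorphisms phi : A' -> B' and
   psi : A/Z(A) -> B/Z(B) such that phi(theta_A(u,v)) = theta_B(psi u, psi v),
   where theta_A(xZ, yZ) = [x, y] = x^-1 y^-1 x y (MathComp's [~ x, y]).
   The compatibility is stated on representatives. *)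
Definition isoclinic (gT rT : finGroupType) (A : {group gT}) (B : {group rT}) : Prop :=
  exists (phi : {morphism A^`(1) >-> rT})
         (psi : {morphism A / 'Z(A) >-> coset_of 'Z(B)}),
    [/\ isom (A^`(1)) (B^`(1)) phi,
        isom (A / 'Z(A)) (B / 'Z(B)) psi &
        forall x y x' y', x \in A -> y \in A -> x' \in B -> y' \in B ->
          coset 'Z(B) x' = psi (coset 'Z(A) x) ->
          coset 'Z(B) y' = psi (coset 'Z(A) y) ->
          phi [~ x, y] = [~ x', y']].

(* Main.v *)
Require Import Defs.
From mathcomp Require Import all_boot all_fingroup all_solvable.
Set Implicit Arguments. Unset Strict Implicit. Unset Printing Implicit Defensive.
Import GroupScope.

Section Aux.
Variable gT : finGroupType.
Implicit Types G H : {group gT}.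

Lemma card_der_fact H : #|H| = (#|H / H^`(1)| * #|H^`(1)|)%N.
Proof.
rewrite card_quotient; last by rewrite normal_norm // der_normal.
by rewrite mulnC Lagrange // der_sub.
Qed.

Lemma crit_le H G : (#|H / H^`(1)| <= #|G / G^`(1)|) = (#|H| * #|G^`(1)| <= #|G| * #|H^`(1)|).
Proof.
rewrite [#|H|]card_der_fact [#|G|]card_der_fact -!mulnA [(#|G^`(1)| * _)%N]mulnC.
by rewrite leq_pmul2r // muln_gt0 !cardG_gt0.
Qed.

Lemma crit_lt H G : (#|H / H^`(1)| < #|G / G^`(1)|) = (#|H| * #|G^`(1)| < #|G| * #|H^`(1)|).
Proof.
rewrite [#|H|]card_der_fact [#|G|]card_der_fact -!mulnA [(#|G^`(1)| * _)%N]mulnC.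
by rewrite ltn_pmul2r // muln_gt0 !cardG_gt0.
Qed.

Lemma der_mulZ G H : H \subset G -> (H <*> 'Z(G))^`(1) = H^`(1).
Proof.
move=> sHG.
have cZH : 'Z(G) \subset 'C(H).
  by rewrite (subset_trans (subsetIr _ _)) // centS.
have defK := cprodEY cZH.
have := der_cprod 1 defK.
by rewrite (derG1P (center_abelian G)) cprodg1.
Qed.

Lemma cardZ G H : 'Z(G) \subset H -> H \subset G -> #|H| = (#|H / 'Z(G)| * #|'Z(G)|)%N.
Proof.
move=> sZH sHG.
rewrite card_quotient; last first.
  by rewrite (subset_trans sHG) // normal_norm // center_normal.
by rewrite mulnC Lagrange.
Qed.


Lemma reduce_gen G (lt : bool) :
  (forall H, H \proper G -> 'Z(G) \subset H ->
     (if lt then #|H| * #|G^`(1)| < #|G| * #|H^`(1)| else #|H| * #|G^`(1)| <= #|G| * #|H^`(1)|)%N) ->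
  forall H, H \proper G ->
     (if lt then #|H| * #|G^`(1)| < #|G| * #|H^`(1)| else #|H| * #|G^`(1)| <= #|G| * #|H^`(1)|)%N.
Proof.
move=> hyp H pHG.
have sHG := proper_sub pHG.
pose K := (H <*> 'Z(G))%G.
have sKG : K \subset G by rewrite join_subG sHG center_sub.
have sHK : H \subset K := joing_subl _ _.
have sZK : 'Z(G) \subset K := joing_subr _ _.
have dK : K^`(1) = H^`(1) := der_mulZ sHG.
have lHG := proper_card pHG.
have lHK := subset_leq_card sHK.
have h0 := cardG_gt0 H^`(1).
case: (eqVproper sKG) => [eKG | pKG].
  have eG : G^`(1) = H^`(1) by rewrite -dK eKG.
  by rewrite eG; move: hyp; case: lt => _; rewrite ?ltn_pmul2r ?leq_pmul2r // ltnW.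
have := hyp K pKG sZK; rewrite dK.
move: hyp; case: lt => _ h.
  by apply: leq_ltn_trans h; rewrite leq_mul2r lHK orbT.
by apply: leq_trans h; rewrite leq_mul2r lHK orbT.
Qed.

Lemma reduce_wt G :
  (forall H, H \proper G -> 'Z(G) \subset H -> #|H| * #|G^`(1)| <= #|G| * #|H^`(1)|)%N ->
  weakly_top G.
Proof.
move=> hyp H pHG; rewrite crit_le; exact: (@reduce_gen G false hyp H pHG).
Qed.

Lemma reduce_top G :
  (forall H, H \proper G -> 'Z(G) \subset H -> #|H| * #|G^`(1)| < #|G| * #|H^`(1)|)%N ->
  top G.
Proof.
move=> hyp H pHG; rewrite crit_lt; exact: (@reduce_gen G true hyp H pHG).
Qed.

Lemma Zform G H (lt : bool) : 'Z(G) \subset H -> H \subset G ->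
  (if lt then #|H| * #|G^`(1)| < #|G| * #|H^`(1)| else #|H| * #|G^`(1)| <= #|G| * #|H^`(1)|)%N =
  (if lt then #|H / 'Z(G)| * #|G^`(1)| < #|G / 'Z(G)| * #|H^`(1)|
   else #|H / 'Z(G)| * #|G^`(1)| <= #|G / 'Z(G)| * #|H^`(1)|)%N.
Proof.
move=> sZH sHG.
rewrite (cardZ sZH sHG) (cardZ (center_sub G) (subxx G)) ![(_ * #|'Z(G)|)%N]mulnC -!mulnA.
by case: lt; rewrite ?ltn_pmul2l ?leq_pmul2l.
Qed.
End Aux.

Theorem theorem1p3 (gT rT : finGroupType) (A : {group gT}) (B : {group rT}) :
  isoclinic A B ->
  (weakly_top A -> weakly_top B) /\ (top A -> top B).
Proof.
move=> [phi [psi [iphi ipsi compat]]].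
have cA : #|A / 'Z(A)| = #|B / 'Z(B)| := isom_card ipsi.
have cA' : #|A^`(1)| = #|B^`(1)| := isom_card iphi.
case/isomP: iphi => injphi imphi.
case/isomP: ipsi => injpsi impsi.
have key : forall K : {group rT}, K \proper B -> 'Z(B) \subset K ->
   exists H : {group gT}, [/\ H \proper A, 'Z(A) \subset H,
      #|H / 'Z(A)| = #|K / 'Z(B)| & #|H^`(1)| = #|K^`(1)|].
  move=> K pK sZK.
  have sKB := proper_sub pK.
  pose H := (coset 'Z(A) @*^-1 (psi @*^-1 (K / 'Z(B))))%G.
  have eHq : H / 'Z(A) = psi @*^-1 (K / 'Z(B)) := cosetpreK _.
  have eKq : psi @* (H / 'Z(A)) = K / 'Z(B).
    by rewrite eHq morphpreK // impsi quotientS.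
  have sHA : H \subset A.
    by rewrite /H sub_cosetpre_quo ?center_normal // morphpre_sub.
  have sZH : 'Z(A) \subset H.
    by rewrite -{1}(ker_coset 'Z(A)) ker_sub_pre.
  have nZB : B \subset 'N('Z(B)) by rewrite normal_norm ?center_normal.
  have pH : H \proper A.
    rewrite properE sHA /=; apply/negP => sAH.
    move: pK; rewrite properE sKB /= => /negP; apply.
    rewrite -(quotientSGK nZB sZK) -impsi -eKq.
    by apply: morphimS; apply: quotientS.
  have sHqA : H / 'Z(A) \subset A / 'Z(A) := quotientS _ sHA.
  exists H; split => //.
    by rewrite -eKq (card_injm injpsi sHqA).
  have sCA : commg_set H H \subset A^`(1).
    apply/subsetP => w /imset2P [x y xH yH ->].
    by rewrite derg1 mem_commg // (subsetP sHA).
  have eD : phi @* H^`(1) = K^`(1).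
    rewrite [H^`(1)]derg1 [K^`(1)]derg1 /commutator morphim_gen //.
    congr <<_>>; apply/eqP; rewrite eqEsubset; apply/andP; split; apply/subsetP.
      move=> z /morphimP [w wD wS ->].
      case/imset2P: wS => x y xH yH ->.
      have xA := subsetP sHA x xH; have yA := subsetP sHA y yH.
      have : psi (coset 'Z(A) x) \in K / 'Z(B).
        by rewrite -eKq mem_morphim // mem_quotient.
      case/morphimP => x' _ x'K ex'.
      have : psi (coset 'Z(A) y) \in K / 'Z(B).
        by rewrite -eKq mem_morphim // mem_quotient.
      case/morphimP => y' _ y'K ey'.
      rewrite (compat x y x' y') ?(subsetP sKB) //.
      exact: imset2_f.
    move=> z /imset2P [x' y' x'K y'K ->].
    have : coset 'Z(B) x' \in psi @* (H / 'Z(A)) by rewrite eKq mem_quotient.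
    case/morphimP => u _ uH ex'.
    case/morphimP: uH => x _ xH ex.
    have : coset 'Z(B) y' \in psi @* (H / 'Z(A)) by rewrite eKq mem_quotient.
    case/morphimP => v _ vH ey'.
    case/morphimP: vH => y _ yH ey.
    have xA := subsetP sHA x xH; have yA := subsetP sHA y yH.
    rewrite -(compat x y x' y') ?(subsetP sKB) //; last by rewrite ey' ey.
      apply: mem_morphim; last exact: imset2_f.
      by rewrite (subsetP sCA) // imset2_f.
    by rewrite ex' ex.
  by rewrite -eD card_injm // dergS.
split=> hA.
  apply: reduce_wt => K pK sZK.
  have [H [pH sZH e1 e2]] := key K pK sZK.
  have := hA H pH; rewrite crit_le.
  rewrite (@Zform _ _ _ false sZH (proper_sub pH)) (@Zform _ _ _ false sZK (proper_sub pK)) /=.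
  by rewrite e1 e2 cA cA'.
apply: reduce_top => K pK sZK.
have [H [pH sZH e1 e2]] := key K pK sZK.
have := hA H pH; rewrite crit_lt.
rewrite (@Zform _ _ _ true sZH (proper_sub pH)) (@Zform _ _ _ true sZK (proper_sub pK)) /=.
by rewrite e1 e2 cA cA'.
Qed.
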